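(* Let $T$ be a left regular pre-truss and $\mathrm{Q}(T)$ its pre-truss of left fractions. (1) If the heap of $T$ is Abelian, then so is the heap of $\mathrm{Q}(T)$. (2) If $T$ is a near-truss, then $\mathrm{Q}(T)$ is a near-truss. (3) If $T$ is a skew truss, then $\mathrm{Q}(T)$ is a skew truss.
   Context: A heap is a set with a ternary operation $[-,-,-]$ satisfying $[a_1,a_2,[a_3,a_4,a_5]]=[[a_1,a_2,a_3],a_4,a_5]$ and $[a,a,b]=b=[b,a,a]$; it is Abelian if $[a,b,c]=[c,b,a]$. A pre-truss is a heap with an associative multiplication; a near-truss satisfies $a[b,c,d]=[ab,ac,ad]$; a skew truss is a near-truss also satisfying $[b,c,d]a=[ba,ca,da]$. An absorber is $z$ with $tz=z=zt$ for all $t$; $T^{\mathrm{Abs}}$ is $T$ minus its (unique) absorber, or $T$ if none. $T$ is a domain if for every $a\in T^{\mathrm{Abs}}$ and $b\neq c$, $ab\neq ac$ and $ba\neq ca$; it is left regular if it is a domain and for all $x,y\in T^{\mathrm{Abs}}$ there exist $r,s\in T^{\mathrm{Abs}}$ with $rx=sy$. $\mathrm{Q}(T)$ is the set of classes $\frac{a}{b}$ of $(b,a)\in T^{\mathrm{Abs}}\times T$ under $(b,a)\sim(b',a')$ iff $\beta b=\beta'b'$, $\beta a=\beta'a'$ for some $\beta,\beta'\in T^{\mathrm{Abs}}$, with heap operation $\left[\frac{a}{b},\frac{a'}{b'},\frac{a''}{b''}\right]=\frac{[\beta_1a,\beta_2a',\beta_3a'']}{\beta_1b}$ for $\beta_i\in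 T^{\mathrm{Abs}}$ with $\beta_1b=\beta_2b'=\beta_3b''$, and multiplication $\frac{a}{b}\cdot\frac{a'}{b'}=\frac{\gamma a'}{\gamma'b}$ for $\gamma,\gamma'\in T^{\mathrm{Abs}}$ with $\gamma b'=\gamma'a$; this is a well-defined pre-truss. *)

(* Defs.v *)
Set Implicit Arguments.

Section Trusses.
Variable T : Type.
Variable h : T -> T -> T -> T.
Variable m : T -> T -> T.

Definition is_heap : Prop :=
  (forall a1 a2 a3 a4 a5, h a1 a2 (h a3 a4 a5) = h (h a1 a2 a3) a4 a5) /\
  (forall a b, h a a b = b /\ h b a a = b).

Definition heap_abelian : Prop := forall a b c, h a b c = h c b a.

Definition is_pretruss : Prop :=
  is_heap /\ (forall a b c, m a (m b c) = m (m a b) c).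

Definition left_distrib : Prop :=
  forall a b c d, m a (h b c d) = h (m a b) (m a c) (m a d).

Definition right_distrib : Prop :=
  forall a b c d, m (h b c d) a = h (m b a) (m c a) (m d a).

Definition is_near_truss : Prop := is_pretruss /\ left_distrib.
Definition is_skew_truss : Prop := is_near_truss /\ right_distrib.

Definition is_absorber (z : T) : Prop := forall t, m t z = z /\ m z t = z.
Definition inTAbs (a : T) : Prop := ~ is_absorber a.

Definition is_domain : Prop :=
  forall a b c, inTAbs a -> b <> c -> m a b <> m a c /\ m b a <> m c a.

Definition left_regular : Prop :=
  is_domain /\
  forall x y, inTAbs x -> inTAbs y ->
    exists r s, inTAbs r /\ inTAbs s /\ m r x = m s y.

(* A pair (b, a) represents the fraction a/b; it is admissible iff b ∈ T^Abs. *)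
Definition qrel (p p' : T * T) : Prop :=
  let (b, a) := p in let (b', a') := p' in
  inTAbs b /\ inTAbs b' /\
  exists beta beta', inTAbs beta /\ inTAbs beta' /\
    m beta b = m beta' b' /\ m beta a = m beta' a'.

(* Elements of Q(T) are the equivalence classes, viewed as predicates on pairs. *)
Definition is_qclass (X : T * T -> Prop) : Prop :=
  exists p, inTAbs (fst p) /\ X = qrel p.

(* Heap operation on classes, computed from representatives and any
   admissible choice of the beta_i (well-definedness is part of the theory). *)
Definition Qheap (X Y Z : T * T -> Prop) : T * T -> Prop :=
  fun q => exists b1 a1 b2 a2 b3 a3 be1 be2 be3,
    X (b1, a1) /\ Y (b2, a2) /\ Z (b3, a3) /\
    inTAbs be1 /\ inTAbs be2 /\ inTAbs be3 /\
    m be1 b1 = m be2 b2 /\ m be2 b2 = m be3 b3 /\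
    qrel (m be1 b1, h (m be1 a1) (m be2 a2) (m be3 a3)) q.

(* Multiplication on classes: (a/b)(a'/b') = (γ a')/(γ' b) with γ b' = γ' a,
   γ, γ' ∈ T^Abs.  When a is the absorber, a/b is the absorber class and the
   product is the absorber class. *)
Definition Qmul (X Y : T * T -> Prop) : T * T -> Prop :=
  fun q => exists b a b' a',
    X (b, a) /\ Y (b', a') /\
    ((exists g g', inTAbs g /\ inTAbs g' /\ m g b' = m g' a /\
                   qrel (m g' b, m g a') q)
     \/ (is_absorber a /\ qrel (b, a) q)).

Definition Q_heap_abelian : Prop :=
  forall X Y Z, is_qclass X -> is_qclass Y -> is_qclass Z ->
    Qheap X Y Z = Qheap Z Y X.

Definition Q_left_distrib : Prop :=
  forall A X Y Z, is_qclass A -> is_qclass X -> is_qclass Y -> is_qclass Z ->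
    Qmul A (Qheap X Y Z) = Qheap (Qmul A X) (Qmul A Y) (Qmul A Z).

Definition Q_right_distrib : Prop :=
  forall A X Y Z, is_qclass A -> is_qclass X -> is_qclass Y -> is_qclass Z ->
    Qmul (Qheap X Y Z) A = Qheap (Qmul X A) (Qmul Y A) (Qmul Z A).

Definition Q_is_heap : Prop :=
  (forall X1 X2 X3 X4 X5, is_qclass X1 -> is_qclass X2 -> is_qclass X3 ->
     is_qclass X4 -> is_qclass X5 ->
     Qheap X1 X2 (Qheap X3 X4 X5) = Qheap (Qheap X1 X2 X3) X4 X5) /\
  (forall X Y, is_qclass X -> is_qclass Y -> Qheap X X Y = Y /\ Qheap Y X X = Y).

Definition Q_is_pretruss : Prop :=
  Q_is_heap /\
  (forall X Y Z, is_qclass X -> is_qclass Y -> is_qclass Z ->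
     Qmul X (Qmul Y Z) = Qmul (Qmul X Y) Z).

Definition Q_is_near_truss : Prop := Q_is_pretruss /\ Q_left_distrib.
Definition Q_is_skew_truss : Prop := Q_is_near_truss /\ Q_right_distrib.

End Trusses.

(* Main.v *)
Require Import Defs.
From Stdlib Require Import Classical FunctionalExtensionality PropExtensionality List.
Set Implicit Arguments.

Section Q.
Variable T : Type.
Variable h : T -> T -> T -> T.
Variable m : T -> T -> T.
Hypothesis mA : forall a b c, m a (m b c) = m (m a b) c.
Hypothesis HD : is_domain m.
Hypothesis HO : forall x y, inTAbs m x -> inTAbs m y ->
    exists r s, inTAbs m r /\ inTAbs m s /\ m r x = m s y.
Local Notation TA := (inTAbs m).

Lemma canl a b c : TA a -> m a b = m a c -> b = c.
Proof. intros Ha E. destruct (classic (b = c)) as [|N]; [auto|].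
  destruct (HD Ha N); contradiction. Qed.
Lemma canr a b c : TA a -> m b a = m c a -> b = c.
Proof. intros Ha E. destruct (classic (b = c)) as [|N]; [auto|].
  destruct (HD Ha N); contradiction. Qed.
Lemma nTA_abs a : ~ TA a -> is_absorber m a.
Proof. unfold inTAbs; intro H; apply NNPP; auto. Qed.
Lemma TA_mul a b : TA a -> TA b -> TA (m a b).
Proof. intros Ha Hb Hab. apply Hb.
  assert (all : forall t t' : T, t = t').
  { intros t t'. apply (canl Hb). apply (canl Ha). rewrite !mA.
    rewrite (proj2 (Hab t)), (proj2 (Hab t')). reflexivity. }
  intro t; split; apply all. Qed.
Lemma absl z t : is_absorber m z -> m z t = z.
Proof. intro Hz; apply (proj2 (Hz t)). Qed.
Lemma absr z t : is_absorber m z -> m t z = z.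
Proof. intro Hz; apply (proj1 (Hz t)). Qed.
Lemma abs_left x e z : is_absorber m z -> TA e -> m x e = z -> x = z.
Proof. intros Hz He E. apply (canr He). rewrite E, absl; auto. Qed.
Lemma abs_nTA z : is_absorber m z -> ~ TA z.
Proof. intros Hz H; apply H, Hz. Qed.

Lemma qrelE b a b' a' : qrel m (b,a) (b',a') <->
  TA b /\ TA b' /\ exists beta beta', TA beta /\ TA beta' /\
    m beta b = m beta' b' /\ m beta a = m beta' a'.
Proof. reflexivity. Qed.

Lemma qrel_refl b a : TA b -> qrel m (b,a) (b,a).
Proof. intros; apply qrelE; repeat split; auto. exists b, b; auto. Qed.
Lemma qrel_sym b a b' a' : qrel m (b,a) (b',a') -> qrel m (b',a') (b,a).
Proof. rewrite !qrelE. intros (H1 & H2 & be & be' & H3 & H4 & H5 & H6).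
  repeat split; auto. exists be', be; auto. Qed.
Lemma qrel_trans b a b' a' b'' a'' : qrel m (b,a) (b',a') -> qrel m (b',a') (b'',a'')
  -> qrel m (b,a) (b'',a'').
Proof. rewrite !qrelE. intros (H1 & H2 & be & be' & H3 & H4 & H5 & H6)
  (_ & H2' & ga & ga' & H3' & H4' & H5' & H6').
  destruct (HO H4 H3') as (r & s & Hr & Hs & E).
  repeat split; auto. exists (m r be), (m s ga'). repeat split; try apply TA_mul; auto.
  - rewrite <- !mA, H5, !mA, E, <- !mA, H5'; reflexivity.
  - rewrite <- !mA, H6, !mA, E, <- !mA, H6'; reflexivity. Qed.
Lemma qrel_ad b a b' a' : qrel m (b,a) (b',a') -> TA b /\ TA b'.
Proof. rewrite qrelE; tauto. Qed.
Lemma qrel_lift c b a : TA c -> TA b -> qrel m (m c b, m c a) (b,a).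
Proof. intros Hc Hb. apply qrelE; repeat split; auto using TA_mul.
  exists c, (m c c). repeat split; auto using TA_mul. Qed.
Lemma qrel_same D u u' : qrel m (D,u) (D,u') -> u = u'.
Proof. rewrite qrelE. intros (H1 & _ & be & be' & H3 & H4 & H5 & H6).
  apply (canr H1) in H5. subst. apply (canl H3) in H6. auto. Qed.
Lemma qrel_abs b b' z : is_absorber m z -> TA b -> TA b' -> qrel m (b,z) (b',z).
Proof. intros Hz Hb Hb'. destruct (HO Hb Hb') as (r & s & Hr & Hs & E).
  apply qrelE; repeat split; auto. exists r, s; repeat split; auto.
  rewrite !absr; auto. Qed.
Lemma qrel_abs2 b b' z a : is_absorber m z -> qrel m (b,z) (b',a) -> a = z.
Proof. intros Hz. rewrite qrelE. intros (H1 & _ & be & be' & H3 & H4 & H5 & H6).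
  rewrite absr in H6 by auto. apply (canl H4). rewrite <- H6, absr; auto. Qed.
Lemma qrel_eq b a b' a' : qrel m (b,a) (b',a') -> qrel m (b,a) = qrel m (b',a').
Proof. intro H. extensionality q. destruct q as [c d]. apply propositional_extensionality.
  split; intro H'; eauto using qrel_trans, qrel_sym. Qed.
Lemma qrel_in b a : TA b -> qrel m (b,a) (b,a).
Proof. apply qrel_refl. Qed.


Definition MC (a b' g g' : T) := TA g' /\ m g b' = m g' a.

Lemma W1 b a b' a' g g' e e' : TA b -> TA b' -> MC a b' g g' -> MC a b' e e' ->
  qrel m (m g' b, m g a') (m e' b, m e a').
Proof. intros Hb Hb' [Hg' Eg] [He' Ee].
  destruct (HO Hg' He') as (r & s & Hr & Hs & E).
  assert (E2 : m (m r g) b' = m (m s e) b').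
  { rewrite <- !mA, Eg, Ee, !mA, E; reflexivity. }
  apply (canr Hb') in E2.
  apply qrelE; repeat split; auto using TA_mul. exists r, s; repeat split; auto.
  - rewrite !mA, E; reflexivity.
  - rewrite !mA, E2; reflexivity. Qed.

Lemma W2 b1 a1 b a b' a' g g' : qrel m (b1,a1) (b,a) -> MC a b' g g' -> TA b' ->
  exists k k', MC a1 b' k k' /\ qrel m (m k' b1, m k a') (m g' b, m g a').
Proof. intros Hq [Hg' Eg] Hb'. pose proof (qrel_ad Hq) as [Hb1 Hb].
  apply qrelE in Hq as (_ & _ & be & be' & H3 & H4 & H5 & H6).
  destruct (HO Hg' H4) as (r & s & Hr & Hs & E).
  exists (m r g), (m s be). split; [split|].
  - auto using TA_mul.
  - rewrite <- !mA, Eg, !mA, E, <- !mA, H6; reflexivity.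
  - replace (m (m s be) b1) with (m r (m g' b)).
    + rewrite <- mA. apply qrel_lift; auto using TA_mul.
    + rewrite <- mA, H5, !mA, E; reflexivity. Qed.

Lemma W3 b a b2 a2 b' a' g g' : qrel m (b2,a2) (b',a') -> MC a b' g g' -> TA b ->
  exists k k', MC a b2 k k' /\ qrel m (m k' b, m k a2) (m g' b, m g a').
Proof. intros Hq [Hg' Eg] Hb. pose proof (qrel_ad Hq) as [Hb2 Hb'].
  apply qrelE in Hq as (_ & _ & de & de' & H3 & H4 & H5 & H6).
  destruct (classic (TA g)) as [Hg|Hg].
  - destruct (HO Hg H4) as (r & s & Hr & Hs & E).
    exists (m s de), (m r g'). split; [split|].
    + auto using TA_mul.
    + rewrite <- !mA, H5, !mA, <- E, <- !mA, Eg; reflexivity.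
    + replace (m (m s de) a2) with (m r (m g a')).
      * rewrite <- mA. apply qrel_lift; auto using TA_mul.
      * rewrite <- mA, H6, !mA, E; reflexivity.
  - apply nTA_abs in Hg. exists g, g'. split; [split|].
    + auto.
    + rewrite <- Eg, !absl; auto.
    + rewrite !(absl _ Hg). apply qrel_refl; auto using TA_mul. Qed.

Lemma ex_choice a b' : TA b' -> exists g g', MC a b' g g'.
Proof. intros Hb'. destruct (classic (TA a)) as [Ha|Ha].
  - destruct (HO Hb' Ha) as (r & s & Hr & Hs & E). exists r, s; split; auto.
  - apply nTA_abs in Ha. exists a, b'. split; auto. rewrite absl, absr; auto. Qed.

Lemma mul_char b a b' a' g g' : TA b -> TA b' -> MC a b' g g' ->
  Qmul m (qrel m (b,a)) (qrel m (b',a')) = qrel m (m g' b, m g a').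
Proof. intros Hb Hb' HM. extensionality q. destruct q as [qb qa].
  apply propositional_extensionality. split.
  - intros (b1 & a1 & b2 & a2 & X1 & Y1 & [(k & k' & Hk & Hk' & Ek & Hq) | (Ha1 & Hq)]).
    + destruct (@W3 b a b2 a2 b' a' g g' (qrel_sym Y1) HM Hb) as (k1 & k1' & HM1 & Q1).
      destruct (@W2 b1 a1 b a b2 a2 k1 k1' (qrel_sym X1) HM1 (proj2 (qrel_ad Y1))) as (k2 & k2' & HM2 & Q2).
      assert (HM3 : MC a1 b2 k k') by (split; auto).
      pose proof (@W1 b1 a1 b2 a2 k2 k2' k k' (proj2 (qrel_ad X1)) (proj2 (qrel_ad Y1)) HM2 HM3) as Q3.
      eapply qrel_trans; [|exact Hq].
      eapply qrel_trans; [apply qrel_sym; exact Q1|].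
      eapply qrel_trans; [apply qrel_sym; exact Q2|]. exact Q3.
    + pose proof (qrel_abs2 Ha1 (qrel_sym X1)) as ->.
      destruct HM as [Hg' Eg]. rewrite (absr g' Ha1) in Eg.
      apply abs_left in Eg; auto. subst g.
      rewrite (absl a' Ha1). eapply qrel_trans; [|exact Hq].
      apply qrel_abs; auto using TA_mul. apply (proj2 (qrel_ad X1)).
  - intro Hq. destruct HM as [Hg' Eg]. exists b, a, b', a'.
    split; [apply qrel_refl; auto|]. split; [apply qrel_refl; auto|].
    destruct (classic (TA a)) as [Ha|Ha].
    + left. exists g, g'. refine (conj _ (conj Hg' (conj Eg Hq))).
      intro Hg. apply (TA_mul Hg' Ha). rewrite <- Eg, (absl b' Hg). exact Hg.
    + right. apply nTA_abs in Ha. split; auto.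
      rewrite (absr g' Ha) in Eg. apply abs_left in Eg; auto. subst g.
      rewrite (absl a' Ha) in Hq. eapply qrel_trans; [|exact Hq].
      apply qrel_abs; auto using TA_mul. Qed.


Lemma heap_char d x1 x2 x3 : left_distrib h m -> TA d ->
  Qheap h m (qrel m (d,x1)) (qrel m (d,x2)) (qrel m (d,x3)) = qrel m (d, h x1 x2 x3).
Proof.
  intros HLD Hd. extensionality q; destruct q as [qb qa].
  apply propositional_extensionality; split.
  - intros (b1 & a1 & b2 & a2 & b3 & a3 & e1 & e2 & e3 & X1 & X2 & X3 & He1 & He2 & He3 & E12 & E23 & Hq).
    eapply qrel_trans; [|exact Hq].
    assert (TD : TA (m e1 b1)) by (apply TA_mul; auto; apply (qrel_ad X1)).
    assert (Q1 : qrel m (m e1 b1, m e1 a1) (d, x1)).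
    { eapply qrel_trans; [apply qrel_lift; auto; apply (qrel_ad X1)|]. apply qrel_sym; exact X1. }
    assert (Q2 : qrel m (m e1 b1, m e2 a2) (d, x2)).
    { rewrite E12. eapply qrel_trans; [apply qrel_lift; auto; apply (qrel_ad X2)|]. apply qrel_sym; exact X2. }
    assert (Q3 : qrel m (m e1 b1, m e3 a3) (d, x3)).
    { rewrite E12, E23. eapply qrel_trans; [apply qrel_lift; auto; apply (qrel_ad X3)|]. apply qrel_sym; exact X3. }
    destruct (HO TD Hd) as (r & s & Hr & Hs & E).
    assert (K : forall u x, qrel m (m e1 b1, u) (d, x) -> m r u = m s x).
    { intros u x H. apply (@qrel_same (m r (m e1 b1))).
      eapply qrel_trans; [apply qrel_lift; auto|]. eapply qrel_trans; [exact H|].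
      rewrite E. apply qrel_sym, qrel_lift; auto. }
    apply qrel_sym.
    eapply qrel_trans; [apply qrel_sym, (@qrel_lift r (m e1 b1) (h (m e1 a1) (m e2 a2) (m e3 a3)) Hr TD)|].
    rewrite HLD, (K _ _ Q1), (K _ _ Q2), (K _ _ Q3), <- HLD, E. apply qrel_lift; auto.
  - intro Hq. exists d, x1, d, x2, d, x3, d, d, d.
    do 3 (split; [apply qrel_refl; auto|]). do 5 (split; [auto|]).
    rewrite <- HLD. eapply qrel_trans; [apply qrel_lift; auto| exact Hq].
Qed.

Lemma common_den (l : list (T*T -> Prop)) X : is_qclass m X -> Forall (is_qclass m) l ->
  exists d, TA d /\ Forall (fun Y => exists y, Y = qrel m (d,y)) (X :: l).
Proof.
  revert X; induction l as [|Y l IH]; intros X HX Hl.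
  - destruct HX as ([b a] & Hb & ->). exists b; split; auto.
    constructor; [exists a; auto| constructor].
  - inversion Hl; subst. destruct (IH Y H1 H2) as (d & Hd & HF).
    destruct HX as ([b a] & Hb & ->). simpl in Hb.
    destruct (HO Hd Hb) as (r & s & Hr & Hs & E).
    exists (m r d); split; [apply TA_mul; auto|]. constructor.
    + exists (m s a). rewrite E. apply qrel_eq. apply qrel_sym, qrel_lift; auto.
    + eapply Forall_impl; [|exact HF]. intros Z (z & ->). exists (m r z).
      apply qrel_eq, qrel_sym, qrel_lift; auto.
Qed.

Lemma mul_abs_l b a b' a' : is_absorber m a -> TA b -> TA b' ->
  Qmul m (qrel m (b,a)) (qrel m (b',a')) = qrel m (b,a).
Proof. intros Ha Hb Hb'.
  assert (HM : MC a b' a b') by (split; auto; rewrite (absl b' Ha), (absr b' Ha); auto).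
  rewrite (@mul_char b a b' a' a b' Hb Hb' HM), (absl a' Ha).
  apply qrel_eq, qrel_abs; auto using TA_mul. Qed.

Lemma mul_class b a b' a' : TA b -> TA b' ->
  exists c e, TA c /\ Qmul m (qrel m (b,a)) (qrel m (b',a')) = qrel m (c,e).
Proof. intros Hb Hb'. destruct (ex_choice a Hb') as (g & g' & HM).
  exists (m g' b), (m g a'). split; [apply TA_mul; auto; apply HM|].
  apply mul_char; auto. Qed.


Lemma Qmul_assoc X Y Z : is_qclass m X -> is_qclass m Y -> is_qclass m Z ->
  Qmul m X (Qmul m Y Z) = Qmul m (Qmul m X Y) Z.
Proof.
  intros ([b a] & Hb & ->) ([b' a'] & Hb' & ->) ([b'' a''] & Hb'' & ->). simpl in *.
  destruct (classic (TA a)) as [Ha|Ha].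
  - destruct (ex_choice a Hb') as (g & g' & HM1).
    pose proof HM1 as [Hg' Eg].
    rewrite (@mul_char b a b' a' g g' Hb Hb' HM1).
    assert (Tgb : TA (m g' b)) by (apply TA_mul; auto).
    destruct (ex_choice (m g a') Hb'') as (k & k' & HM2).
    pose proof HM2 as [Hk' Ek].
    rewrite (@mul_char (m g' b) (m g a') b'' a'' k k' Tgb Hb'' HM2).
    assert (Hg : TA g).
    { intro Hg. apply (TA_mul Hg' Ha). rewrite <- Eg, (absl b' Hg). exact Hg. }
    assert (HM3 : MC a' b'' k (m k' g)).
    { split; [apply TA_mul; auto|]. rewrite Ek, mA; reflexivity. }
    rewrite (@mul_char b' a' b'' a'' k (m k' g) Hb' Hb'' HM3).
    assert (T2 : TA (m (m k' g) b')) by (repeat apply TA_mul; auto).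
    assert (HM4 : MC a (m (m k' g) b') b (m b (m k' g'))).
    { split; [repeat apply TA_mul; auto|]. rewrite <- !mA, Eg; reflexivity. }
    rewrite (@mul_char b a (m (m k' g) b') (m k a'') b (m b (m k' g')) Hb T2 HM4).
    apply qrel_eq.
    replace (m (m b (m k' g')) b) with (m b (m k' (m g' b))) by (rewrite !mA; reflexivity).
    apply qrel_lift; auto using TA_mul.
  - apply nTA_abs in Ha.
    destruct (mul_class a' a'' Hb' Hb'') as (c & e & Hc & ->).
    rewrite (mul_abs_l e Ha Hb Hc), (mul_abs_l a' Ha Hb Hb'), (mul_abs_l a'' Ha Hb Hb'').
    reflexivity.
Qed.

Lemma Q_heap_ok : is_heap h -> left_distrib h m -> Q_is_heap h m.
Proof.
  intros [HH1 HH2] HLD. split.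
  - intros X1 X2 X3 X4 X5 H1 H2 H3 H4 H5.
    destruct (@common_den (X2::X3::X4::X5::nil) X1 H1 ltac:(repeat constructor; assumption))
      as (d & Hd & HF).
    rewrite !Forall_cons_iff in HF.
    destruct HF as ((y1 & ->) & (y2 & ->) & (y3 & ->) & (y4 & ->) & (y5 & ->) & _).
    rewrite !heap_char by auto. f_equal. f_equal. apply HH1.
  - intros X Y HX HY.
    destruct (@common_den (Y::nil) X HX ltac:(repeat constructor; assumption))
      as (d & Hd & HF).
    rewrite !Forall_cons_iff in HF.
    destruct HF as ((y1 & ->) & (y2 & ->) & _).
    rewrite !heap_char by auto. split; f_equal; f_equal; apply HH2.
Qed.

Lemma Q_left_ok : left_distrib h m -> Q_left_distrib h m.
Proof.
  intros HLD A X Y Z ([b a] & Hb & ->) HX HY HZ. simpl in Hb.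
  destruct (@common_den (Y::Z::nil) X HX ltac:(repeat constructor; assumption))
    as (d & Hd & HF).
  rewrite !Forall_cons_iff in HF.
  destruct HF as ((x1 & ->) & (x2 & ->) & (x3 & ->) & _).
  rewrite heap_char by auto.
  destruct (ex_choice a Hd) as (g & g' & HM).
  assert (Tg : TA (m g' b)) by (apply TA_mul; auto; apply HM).
  rewrite (@mul_char b a d (h x1 x2 x3) g g' Hb Hd HM),
    (@mul_char b a d x1 g g' Hb Hd HM), (@mul_char b a d x2 g g' Hb Hd HM),
    (@mul_char b a d x3 g g' Hb Hd HM).
  rewrite heap_char by auto. rewrite HLD. reflexivity.
Qed.

Lemma Q_right_ok : left_distrib h m -> right_distrib h m -> Q_right_distrib h m.
Proof.
  intros HLD HRD A X Y Z ([b a] & Hb & ->) HX HY HZ. simpl in Hb.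
  destruct (@common_den (Y::Z::nil) X HX ltac:(repeat constructor; assumption))
    as (d & Hd & HF).
  rewrite !Forall_cons_iff in HF.
  destruct HF as ((x1 & ->) & (x2 & ->) & (x3 & ->) & _).
  rewrite heap_char by auto.
  destruct (ex_choice x1 Hb) as (g1 & g1' & [H1' E1]).
  destruct (ex_choice x2 Hb) as (g2 & g2' & [H2' E2]).
  destruct (ex_choice x3 Hb) as (g3 & g3' & [H3' E3]).
  destruct (HO H1' H2') as (r1 & r2 & Hr1 & Hr2 & E12).
  assert (T12 : TA (m r1 g1')) by (apply TA_mul; auto).
  destruct (HO T12 H3') as (s & s3 & Hs & Hs3 & E123).
  set (E := m s (m r1 g1')).
  assert (TE : TA E) by (apply TA_mul; auto).
  assert (M1 : MC x1 b (m (m s r1) g1) E).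
  { split; auto. unfold E. rewrite <- !mA, E1; reflexivity. }
  assert (M2 : MC x2 b (m (m s r2) g2) E).
  { split; auto. unfold E. rewrite E12, <- !mA, E2; reflexivity. }
  assert (M3 : MC x3 b (m s3 g3) E).
  { split; auto. unfold E. rewrite E123, <- !mA, E3; reflexivity. }
  set (k1 := m (m s r1) g1) in *. set (k2 := m (m s r2) g2) in *. set (k3 := m s3 g3) in *.
  assert (M : MC (h x1 x2 x3) b (h k1 k2 k3) E).
  { split; auto. rewrite HRD, HLD, (proj2 M1), (proj2 M2), (proj2 M3). reflexivity. }
  rewrite (@mul_char d (h x1 x2 x3) b a _ _ Hd Hb M),
    (@mul_char d x1 b a _ _ Hd Hb M1), (@mul_char d x2 b a _ _ Hd Hb M2),
    (@mul_char d x3 b a _ _ Hd Hb M3).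
  rewrite heap_char by auto using TA_mul. rewrite HRD. reflexivity.
Qed.

End Q.

Theorem proposition5p3 (T : Type) (h : T -> T -> T -> T) (m : T -> T -> T)
  (HT : is_pretruss h m) (HLR : left_regular m) :
  (heap_abelian h -> Q_heap_abelian h m) /\
  (is_near_truss h m -> Q_is_near_truss h m) /\
  (is_skew_truss h m -> Q_is_skew_truss h m).
Proof.
  destruct HT as [HH mA]. destruct HLR as [HD HO].
  split; [|split].
  - intros Hab X Y Z _ _ _. extensionality q. apply propositional_extensionality.
    split; intros (b1 & a1 & b2 & a2 & b3 & a3 & e1 & e2 & e3 & X1 & X2 & X3 & He1 & He2 & He3 & E12 & E23 & Hq);
      exists b3, a3, b2, a2, b1, a1, e3, e2, e1;
      do 6 (split; [assumption|]);
      (split; [symmetry; assumption|]); (split; [symmetry; assumption|]);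
      rewrite <- E23, <- E12, Hab; exact Hq.
  - intros [_ HLD]. split; [split|].
    + apply Q_heap_ok; auto.
    + intros; apply Qmul_assoc; auto.
    + apply Q_left_ok; auto.
  - intros [[_ HLD] HRD]. split; [split; [split|]|].
    + apply Q_heap_ok; auto.
    + intros; apply Qmul_assoc; auto.
    + apply Q_left_ok; auto.
    + apply Q_right_ok; auto.
Qed.
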